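(* For any time warp $f$ and $m\in\omega^+$, $f^\star(m)=\bigwedge\{p(n)\mid n\in\omega^+\text{ and } m\le f(n)\}$ (where the meet of the empty set is $\omega$).
   Context: Let $\omega^+=\omega\cup\{\omega\}$ with its natural order. A time warp is a join-preserving map $f\colon\omega^+\to\omega^+$ (equivalently order-preserving with $f(0)=0$ and $f(\omega)=\bigvee_{n\in\omega}f(n)$); time warps are ordered pointwise. $p$ is the time warp $p(m)=\bigvee\{k\in\omega\mid k<m\}$ (so $p(0)=0$, $p(\omega)=\omega$, $p(m)=m-1$ otherwise), and $f^\star$ is the largest time warp $h$ with $f\circ h\le p$. *)

(* Defs.v *)
(* omega^+ = omega ∪ {omega}, modelled as finite naturals plus a top element. *)
From Stdlib Require Import Arith.

Inductive wplus : Type :=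
  | Fin : nat -> wplus
  | Om  : wplus.

Definition wle (x y : wplus) : Prop :=
  match x, y with
  | Fin a, Fin b => a <= b
  | _, Om => True
  | Om, Fin _ => False
  end.

Definition is_lub (S : wplus -> Prop) (x : wplus) : Prop :=
  (forall y, S y -> wle y x) /\ (forall z, (forall y, S y -> wle y z) -> wle x z).

Definition is_glb (S : wplus -> Prop) (x : wplus) : Prop :=
  (forall y, S y -> wle x y) /\ (forall z, (forall y, S y -> wle z y) -> wle z x).

Definition time_warp (f : wplus -> wplus) : Prop :=
  forall (S : wplus -> Prop) (x : wplus),
    is_lub S x -> is_lub (fun y => exists z, S z /\ y = f z) (f x).

Definition p (m : wplus) : wplus :=
  match m with
  | Fin n => Fin (n - 1)
  | Om => Om
  end.

Definition is_star (f g : wplus -> wplus) : Prop :=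
  time_warp g /\ (forall m, wle (f (g m)) (p m)) /\
  (forall h, time_warp h -> (forall m, wle (f (h m)) (p m)) -> forall m, wle (h m) (g m)).

(* Main.v *)
Require Import Defs.
From Stdlib Require Import Arith Lia Classical ClassicalEpsilon.

Lemma wle_refl x : wle x x.
Proof. destruct x; simpl; auto. Qed.

Lemma wle_trans x y z : wle x y -> wle y z -> wle x z.
Proof. destruct x, y, z; simpl; intros; auto; try lia; contradiction. Qed.

Lemma wle_antisym x y : wle x y -> wle y x -> x = y.
Proof. destruct x, y; simpl; intros; auto; try contradiction. f_equal; lia. Qed.

Lemma wle_0 z : wle (Fin 0) z.
Proof. destruct z; simpl; auto; lia. Qed.

Lemma lt_p m y : ~ wle m y -> wle y (p m).
Proof.
  destruct m as [k|], y as [j|]; simpl; intros H; auto; try lia; exfalso; apply H; auto.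
Qed.

Record TW (h : wplus -> wplus) : Prop := {
  tw_mono : forall x y, wle x y -> wle (h x) (h y);
  tw_0 : h (Fin 0) = Fin 0;
  tw_cont : forall z, (forall k, wle (h (Fin k)) z) -> wle (h Om) z }.

Lemma tw_TW h : time_warp h -> TW h.
Proof.
  intros H. split.
  - intros x y Hxy.
    destruct (H (fun z => z = x \/ z = y) y) as [H1 _].
    + split. intros w [->| ->]; auto using wle_refl. intros z Hz. apply Hz; auto.
    + apply H1. exists x; auto.
  - destruct (H (fun _ => False) (Fin 0)) as [_ H2].
    + split. intros _ []. intros; apply wle_0.
    + apply wle_antisym; [|apply wle_0]. apply H2. intros y [z [[] _]].
  - intros z Hz.
    destruct (H (fun w => exists k, w = Fin k) Om) as [_ H2].
    + split. intros y _; destruct y; simpl; auto.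
      intros z' Hz'. destruct z' as [n|]; simpl; auto.
      specialize (Hz' (Fin (S n)) (ex_intro _ _ eq_refl)). simpl in Hz'; lia.
    + apply H2. intros y [w [[k ->] ->]]. apply Hz.
Qed.

Lemma TW_tw h : TW h -> time_warp h.
Proof.
  intros [Hm H0 Hc] A x [Hub Hl]. split.
  - intros y [z [Hz ->]]. apply Hm, Hub, Hz.
  - intros z Hz. destruct x as [k|].
    + destruct (classic (A (Fin k))) as [HS|HS].
      * apply Hz. eauto.
      * destruct k as [|k']. rewrite H0; apply wle_0.
        exfalso. assert (wle (Fin (S k')) (Fin k')); [|simpl in *; lia].
        apply Hl. intros y Hy. specialize (Hub y Hy).
        destruct y as [j|]; simpl in *; [|contradiction].
        assert (j <> S k') by (intros ->; contradiction). lia.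
    + destruct (classic (A Om)) as [HS|HS].
      * apply Hz. eauto.
      * apply Hc. intros j.
        destruct (classic (exists i, j <= i /\ A (Fin i))) as [[i [Hi Si]]|Hn].
        -- apply wle_trans with (h (Fin i)). apply Hm; simpl; auto.
           apply Hz; eauto.
        -- exfalso. assert (wle Om (Fin j)) by (apply Hl; intros y Hy;
             destruct y as [i|]; [|contradiction]; simpl;
             destruct (le_lt_dec j i); [exfalso; apply Hn; eauto|lia]).
           simpl in *; auto.
Qed.

Lemma glb_ex (S : wplus -> Prop) : exists x, is_glb S x.
Proof.
  destruct (classic (exists k, S (Fin k))) as [[k Hk]|Hn].
  - revert Hk. induction k as [k IH] using lt_wf_ind. intros Hk.
    destruct (classic (exists j, j < k /\ S (Fin j))) as [[j [Hj Sj]]|Hn].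
    + eapply IH; eauto.
    + exists (Fin k). split.
      * intros y Hy. destruct y as [j|]; simpl; auto.
        destruct (le_lt_dec k j); auto. exfalso; eauto.
      * intros z Hz. apply Hz, Hk.
  - exists Om. split.
    + intros y Hy. destruct y as [j|]; simpl; auto. exfalso; eauto.
    + intros z _. destruct z; simpl; auto.
Qed.

Section G.
Variable f : wplus -> wplus.
Hypothesis hf : TW f.

Definition Sm (m : wplus) := fun y => exists n : wplus, wle m (f n) /\ y = p n.
Definition G (m : wplus) : wplus := proj1_sig (constructive_indefinite_description _ (glb_ex (Sm m))).
Lemma G_glb m : is_glb (Sm m) (G m).
Proof. unfold G. destruct constructive_indefinite_description; auto. Qed.

Lemma G_mono x y : wle x y -> wle (G x) (G y).
Proof.
  intros Hxy. destruct (G_glb x) as [Hx _]. destruct (G_glb y) as [_ Hy].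
  apply Hy. intros w [n [Hn ->]]. apply Hx. exists n; split; auto.
  eapply wle_trans; eauto.
Qed.

Lemma G_0 : G (Fin 0) = Fin 0.
Proof.
  apply wle_antisym; [|apply wle_0]. destruct (G_glb (Fin 0)) as [H _].
  apply (H (p (Fin 0))). exists (Fin 0). split; auto. apply wle_0.
Qed.

Lemma G_cont : forall z, (forall k, wle (G (Fin k)) z) -> wle (G Om) z.
Proof.
  intros z Hz. destruct z as [N|]; [|destruct (G Om); simpl; auto].
  assert (Hw : forall k, exists n, wle (Fin k) (f n) /\ wle (p n) (Fin N)).
  { intros k. apply NNPP; intros Hn.
    destruct (G_glb (Fin k)) as [_ Hl].
    assert (wle (Fin (S N)) (G (Fin k))).
    { apply Hl. intros y [n [Hn1 ->]]. destruct (p n) as [i|] eqn:E; simpl; auto.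
      destruct (le_lt_dec (S N) i); auto. exfalso; apply Hn; exists n; rewrite E; simpl; split; auto; lia. }
    specialize (Hz k). pose proof (wle_trans _ _ _ H Hz). simpl in *; lia. }
  assert (HO : f (Fin (S N)) = Om).
  { destruct (f (Fin (S N))) as [M|] eqn:E; auto. exfalso.
    destruct (Hw (S M)) as [n [H1 H2]].
    assert (wle n (Fin (S N))) by (destruct n; simpl in *; auto; lia).
    pose proof (tw_mono f hf _ _ H). rewrite E in H0.
    pose proof (wle_trans _ _ _ H1 H0). simpl in *; lia. }
  destruct (G_glb Om) as [H _]. replace (Fin N) with (p (Fin (S N))) by (simpl; f_equal; lia). apply H.
  exists (Fin (S N)); rewrite HO; simpl; split; auto.
Qed.

Lemma G_TW : TW G.
Proof. split. apply G_mono. apply G_0. apply G_cont. Qed.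

Lemma G_below m : wle (f (G m)) (p m).
Proof.
  destruct (G_glb m) as [Hlb _].
  assert (Hfin : forall j, wle (Fin (S j)) (G m) -> wle (f (Fin (S j))) (p m)).
  { intros j Hj. apply lt_p. intros Hc.
    assert (wle (G m) (p (Fin (S j)))) by (apply Hlb; exists (Fin (S j)); auto).
    pose proof (wle_trans _ _ _ Hj H). simpl in *; lia. }
  destruct (G m) as [[|j]|] eqn:E.
  - rewrite (tw_0 f hf). apply wle_0.
  - apply Hfin. simpl; auto.
  - apply (tw_cont f hf). intros [|k]. rewrite (tw_0 f hf); apply wle_0.
    apply Hfin. simpl; auto.
Qed.

Lemma G_max h : TW h -> (forall m, wle (f (h m)) (p m)) -> forall m, wle (h m) (G m).
Proof.
  intros Hh Hb.
  assert (Hf : forall k, wle (h (Fin k)) (G (Fin k))).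
  { intros k. destruct (G_glb (Fin k)) as [_ Hl]. apply Hl.
    intros y [n [Hn ->]]. destruct n as [[|j]|]; simpl.
    - rewrite (tw_0 f hf) in Hn. simpl in Hn. assert (k = 0) by lia; subst.
      rewrite (tw_0 h Hh). simpl; lia.
    - destruct (h (Fin k)) as [i|] eqn:E; simpl.
      + destruct (le_lt_dec i (j - 0)); [lia|]. exfalso.
        assert (wle (Fin (S j)) (h (Fin k))) by (rewrite E; simpl; lia).
        pose proof (tw_mono f hf _ _ H). pose proof (Hb (Fin k)).
        pose proof (wle_trans _ _ _ Hn (wle_trans _ _ _ H0 H1)). simpl in H2.
        assert (k = 0) by lia; subst. rewrite (tw_0 h Hh) in E. injection E; lia.
      + exfalso.
        assert (wle (Fin (S j)) (h (Fin k))) by (rewrite E; simpl; auto).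
        pose proof (tw_mono f hf _ _ H). pose proof (Hb (Fin k)).
        pose proof (wle_trans _ _ _ Hn (wle_trans _ _ _ H0 H1)). simpl in H2.
        assert (k = 0) by lia; subst. rewrite (tw_0 h Hh) in E. discriminate.
    - destruct (h (Fin k)); simpl; auto. }
  intros [k|]; auto. apply (tw_cont h Hh). intros k.
  eapply wle_trans; [apply Hf|]. apply G_mono. simpl; auto.
Qed.

End G.

Theorem lemma2p3 (f : wplus -> wplus) (hf : time_warp f) :
  (exists g, is_star f g) /\
  (forall g, is_star f g ->
     forall m : wplus,
       is_glb (fun y => exists n : wplus, wle m (f n) /\ y = p n) (g m)).
Proof.
  pose proof (tw_TW f hf) as Hf.
  assert (HG : is_star f (G f)).
  { split; [apply TW_tw, G_TW; auto|split].
    - apply G_below; auto.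
    - intros h Hh Hb. apply G_max; auto. apply tw_TW; auto. }
  split; [eauto|].
  intros g [Hg [Hgb Hgm]] m.
  assert (g m = G f m).
  { apply wle_antisym.
    - apply G_max; auto. apply tw_TW; auto.
    - apply Hgm; auto. apply TW_tw, G_TW; auto. apply G_below; auto. }
  rewrite H. apply G_glb.
Qed.
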